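(* Let $G_1$ and $G_2$ be bi-fuzzy automata with event sets $\hat\Sigma_1,\hat\Sigma_2$ over crisp state sets of sizes $m$ and $n$, and let $G_1\|G_2$ be their parallel composition. Then for every $s\in(\hat\Sigma_1\cup\hat\Sigma_2)^*$, $$L_{G_1\|G_2}(s)=L_{G_1}(s)\sqcap L_{G_2}(s),$$ where $L_{G_i}(s)$ is computed by letting each event not in $\hat\Sigma_i$ act in $G_i$ as the identity matrix $I_i$.
   Context: $NCFD$ is the set of normal convex type-1 fuzzy sets $\mu:[0,1]\to[0,1]$ ($\max_u\mu(u)=1$, and $\mu(u_j)\ge\min\{\mu(u_i),\mu(u_k)\}$ for $u_i\le u_j\le u_k$); $a/u_0$ denotes the fuzzy set with value $a$ at $u_0$ and $0$ elsewhere. Operations: $(\mu_1\sqcup\mu_2)(v)=\sup\{\min(\mu_1(u),\mu_2(w)):\max(u,w)=v\}$, $(\mu_1\sqcap\mu_2)(v)=\sup\{\min(\mu_1(u),\mu_2(w)):\min(u,w)=v\}$. Matrix composition: $(R\odot S)(x,z)=\bigsqcup_y[R(x,y)\sqcap S(y,z)]$. Bi-fuzzy tensor: for $\hat A=[\tilde a_{ij}]$ ($k\times m$), $\hat B$ ($p\times s$), $\hat A\otimes\hat B$ is the $kp\times ms$ block matrix with $(i,j)$ block $[\tilde a_{ij}\sqcap\tilde b_{pq}]_{p,q}$. A bi-fuzzy automaton $G=(\hat X,\hat\Sigma,\delta,\hat x_0,\hat x_m)$ over a crisp state set of size $n$ has bi-fuzzy states = row vectors in $NCFD^n$, events $\sigma\in\hat\Sigma$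 given by $n\times n$ matrices over $NCFD$, $\delta(\hat x,\sigma)=\hat x\odot\sigma$, initial and final bi-fuzzy states $\hat x_0,\hat x_m\in NCFD^n$. Its generated language $L_G:\hat\Sigma^*\to NCFD$ is $L_G(\epsilon)=1/1$ and $L_G(\sigma_1\cdots\sigma_k)=\hat x_0\odot\sigma_1\odot\cdots\odot\sigma_k\odot A_n^T$, with $A_n=[1/1,\dots,1/1]$ of length $n$. The unit matrix $I_n$ has $1/1$ on the diagonal and $1/0$ elsewhere. For $G_i=(\hat X_i,\hat\Sigma_i,\delta_i,\hat x_{0i},\hat x_{mi})$, $i=1,2$, with state sets of sizes $m$ and $n$, the parallel composition $G_1\|G_2$ is the bi-fuzzy automaton over a crisp state set of size $mn$ with initial state $\hat x_{01}\otimes\hat x_{02}$, final state $\hat x_{m1}\otimes\hat x_{m2}$, event set $\hat\Sigma_1\cup\hat\Sigma_2$, transitions $(\hat x_1\otimes\hat x_2,\sigma)\mapsto(\hat x_1\otimes\hat x_2)\odot\sigma$, where the matrix of $\sigma$ is $\sigma_1\otimes\sigma_2$ if $\sigma\in\hat\Sigma_1\cap\hat\Sigma_2$ ($\sigma_i$ its matrix in $G_i$), $\sigma_1\otimes I_n$ if $\sigma\in\hat\Sigma_1\setminus\hat\Sigma_2$, and $I_m\otimes\sigma_2$ if $\sigma\in\hat\Sigma_2\setminus\hat\Sigma_1$. *)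

(* Defs.v *)
From HB Require Import structures.
From mathcomp Require Import all_boot all_order all_algebra.
From mathcomp Require Import classical_sets reals.
Set Implicit Arguments. Unset Strict Implicit. Unset Printing Implicit Defensive.
Import Order.TTheory GRing.Theory Num.Theory.
Local Open Scope ring_scope.
Local Open Scope classical_set_scope.

Section BiFuzzy.
Variable R : realType.

(* type-1 fuzzy sets over the unit interval: functions [0,1] -> [0,1];
   represented as functions R -> R, only their values on [0,1] matter. *)
Definition fuzzy := R -> R.

Definition in01 (u : R) : Prop := 0 <= u <= 1.

Definition NCFD (mu : fuzzy) : Prop :=
  (forall u, in01 u -> 0 <= mu u <= 1) /\
  (exists2 u, in01 u & mu u = 1) /\
  (forall ui uj uk, in01 ui -> in01 uk -> ui <= uj <= uk ->
       Num.min (mu ui) (mu uk) <= mu uj).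

(* a / u0 : value a at u0, 0 elsewhere *)
Definition fsingle (a u0 : R) : fuzzy := fun u => if u == u0 then a else 0.

Definition fjoin (mu1 mu2 : fuzzy) : fuzzy := fun v =>
  sup [set r | exists u w, [/\ in01 u, in01 w, Num.max u w = v &
                                 r = Num.min (mu1 u) (mu2 w)]].

Definition fmeet (mu1 mu2 : fuzzy) : fuzzy := fun v =>
  sup [set r | exists u w, [/\ in01 u, in01 w, Num.min u w = v &
                                 r = Num.min (mu1 u) (mu2 w)]].

(* the unit 1/0 of the join, used for the iterated join *)
Definition fbot : fuzzy := fsingle 1 0.
Definition ftop : fuzzy := fsingle 1 1.

Definition fcomp k m p (A : 'M[fuzzy]_(k, m)) (B : 'M[fuzzy]_(m, p))
  : 'M[fuzzy]_(k, p) :=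
  \matrix_(i, j) \big[fjoin/fbot]_(y < m) fmeet (A i y) (B y j).

Definition funit n : 'M[fuzzy]_n :=
  \matrix_(i, j) if i == j then ftop else fbot.

Definition fones n : 'rV[fuzzy]_n := const_mx ftop.

(* index decomposition for the tensor: k = k1 * n + k2 *)
Lemma tens_index_proof1 m n (k : 'I_(m * n)) : (k %/ n < m)%N.
Proof. by move: m n k=> [_ [] //|m] [|n] k; rewrite ?divn0 // ltn_divLR. Qed.
Lemma tens_index_proof2 m n (k : 'I_(m * n)) : (k %% n < n)%N.
Proof. by rewrite ltn_mod; case: n k=> //; rewrite muln0=> [] []. Qed.
Definition tens_row m n (k : 'I_(m * n)) : 'I_m := Ordinal (tens_index_proof1 k).
Definition tens_col m n (k : 'I_(m * n)) : 'I_n := Ordinal (tens_index_proof2 k).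

(* bi-fuzzy tensor: (i,j) block of A (x) B is [a_ij \sqcap b_pq]_{p,q} *)
Definition ftens k m p s (A : 'M[fuzzy]_(k, m)) (B : 'M[fuzzy]_(p, s))
  : 'M[fuzzy]_(k * p, m * s) :=
  \matrix_(i, j) fmeet (A (tens_row i) (tens_row j)) (B (tens_col i) (tens_col j)).

Record bfa (E : Type) (n : nat) := BFA {
  bfa_ev : pred E;
  bfa_trans : E -> 'M[fuzzy]_n;
  bfa_x0 : 'rV[fuzzy]_n;
  bfa_xm : 'rV[fuzzy]_n }.

Definition NCFD_mx k m (A : 'M[fuzzy]_(k, m)) : Prop :=
  forall i j, NCFD (A i j).

Definition bfa_wf E n (G : bfa E n) : Prop :=
  [/\ NCFD_mx (bfa_x0 G), NCFD_mx (bfa_xm G) &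
      forall e, bfa_ev G e -> NCFD_mx (bfa_trans G e)].

Definition lang_with E n (x0 : 'rV[fuzzy]_n) (M : E -> 'M[fuzzy]_n)
  (s : seq E) : fuzzy :=
  if s is [::] then ftop
  else (fcomp (foldl (fun x e => fcomp x (M e)) x0 s) (fones n)^T) 0 0.

Definition lang E n (G : bfa E n) (s : seq E) : fuzzy :=
  lang_with (bfa_x0 G) (bfa_trans G) s.

Definition lang_ext E n (G : bfa E n) (s : seq E) : fuzzy :=
  lang_with (bfa_x0 G)
    (fun e => if bfa_ev G e then bfa_trans G e else funit n) s.

Definition par E m n (G1 : bfa E m) (G2 : bfa E n) : bfa E (m * n) :=
  BFA (predU (bfa_ev G1) (bfa_ev G2))
      (fun e => if bfa_ev G1 e && bfa_ev G2 e then
                  ftens (bfa_trans G1 e) (bfa_trans G2 e)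
                else if bfa_ev G1 e then ftens (bfa_trans G1 e) (funit n)
                else ftens (funit m) (bfa_trans G2 e))
      (ftens (bfa_x0 G1) (bfa_x0 G2))
      (ftens (bfa_xm G1) (bfa_xm G2)).
End BiFuzzy.

(* Main.v *)
Require Import Defs.
From mathcomp Require Import all_boot all_order all_algebra.
From mathcomp Require Import classical_sets reals.
From HB Require Import structures.
From mathcomp Require Import boolp.
From mathcomp Require Import lra zify.
Set Implicit Arguments. Unset Strict Implicit. Unset Printing Implicit Defensive.
Import Order.TTheory GRing.Theory Num.Theory.
Local Open Scope ring_scope.
Local Open Scope classical_set_scope.

Ltac nomm t := lazymatch t with
  | context [Order.min] => fail
  | context [Order.max] => fail
  | _ => idtac end.
Ltac mm_step :=
  match goal with
  | |- context [@Order.min _ _ ?x ?y] => nomm x; nomm y;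
      let H := fresh "H" in case: (leP x y) => H
  | |- context [@Order.max _ _ ?x ?y] => nomm x; nomm y;
      let H := fresh "H" in case: (leP x y) => H
  end.
Ltac mm := repeat mm_step; try lra.
Ltac mmt := (do 12 (try mm_step)); try lra.


Section Arith.
Variable R : realType.
Implicit Types (ax au bx bu cx cw dx dw s : R).
Lemma A2 ax au bu bx cx dx : au <= ax ->
  Num.min (Num.min au bu) (Num.min cx dx) <= Num.min (Num.min ax cx) (Num.max bx dx).
Proof. move=> *; mm. Qed.
Lemma A3 ax bx cx cw dw dx : cw <= cx ->
  Num.min (Num.min ax bx) (Num.min cw dw) <= Num.min (Num.min ax cx) (Num.max bx dx).
Proof. move=> *; mm. Qed.
Lemma A4 ax bx cx dx s : dx <= bx -> cx <= s ->
  Num.min (Num.min ax cx) (Num.max bx dx) <= Num.min (Num.min ax bx) s.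
Proof. move=> *; mm. Qed.
Lemma A5 ax bx cx dx s : bx <= dx -> ax <= s ->
  Num.min (Num.min ax cx) (Num.max bx dx) <= Num.min (Num.min cx dx) s.
Proof. move=> *; mm. Qed.
Lemma B2 ax bx cx dx cw dw : dw <= dx ->
  Num.min (Num.min ax bx) (Num.min cw dw) <= Num.min (Num.max ax cx) (Num.min bx dx).
Proof. move=> *; mm. Qed.
Lemma B3 ax bx cx dx au bu : bu <= bx ->
  Num.min (Num.min au bu) (Num.min cx dx) <= Num.min (Num.max ax cx) (Num.min bx dx).
Proof. move=> *; mm. Qed.
Lemma B4 ax bx cx dx s : cx <= ax -> dx <= s ->
  Num.min (Num.max ax cx) (Num.min bx dx) <= Num.min (Num.min ax bx) s.
Proof. move=> *; mm. Qed.
Lemma B5 ax bx cx dx s : ax <= cx -> bx <= s ->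
  Num.min (Num.max ax cx) (Num.min bx dx) <= Num.min (Num.min cx dx) s.
Proof. move=> *; mm. Qed.
Lemma A1 (x y : R) : x <= 1 -> Num.min x y <= 1.
Proof. move=> *; mm. Qed.
End Arith.

Section S.
Variable R : realType.
Implicit Types (f g h : fuzzy R) (x y : R).

Lemma test (a b c d: R) : a <= b -> Num.min (Num.max a c) d <= Num.max (Num.min b d) c.
Proof. move=> ?. mm. Qed.

Lemma supL2 (S : set R) B y : (forall z, S z -> z <= B) -> S y -> y <= sup S.
Proof. move=> hB Sy; apply: ub_le_sup => //; by exists B. Qed.

Lemma supL3 (G : set R) K t : G !=set0 -> (forall y, G y -> Num.min K y <= t) ->
  Num.min K (sup G) <= t.
Proof.
move=> G0 H; rewrite leNgt; apply/negP; rewrite lt_min => /andP[tK tG].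
have [y Gy ty] := sup_gt G0 tG.
by move: (H y Gy); rewrite leNgt lt_min tK ty.
Qed.

Definition Lset (f : fuzzy R) x := [set r | exists w, [/\ in01 w, w <= x & r = f w]].
Definition Rset (f : fuzzy R) x := [set r | exists w, [/\ in01 w, x <= w & r = f w]].

Record rep (f a b : fuzzy R) (p : R) : Prop := Rep {
 rp01 : in01 p; rpa : a p = 1; rpb : b p = 1;
 rpE : forall x, in01 x -> f x = Num.min (a x) (b x);
 rpmono : forall x y, in01 x -> in01 y -> x <= y -> a x <= a y /\ b y <= b x;
 rpbnd : forall x, in01 x -> [/\ 0 <= a x, a x <= 1, 0 <= b x & b x <= 1];
 rpL : forall x, in01 x -> a x <= sup (Lset f x);
 rpR : forall x, in01 x -> b x <= sup (Rset f x) }.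

Lemma rp_aR f a b p x : rep f a b p -> in01 x -> p <= x -> a x = 1.
Proof.
move=> r x01 px; apply/le_anti; have [_ -> _ _] := rpbnd r x01.
by have [+ _] := rpmono r (rp01 r) x01 px; rewrite (rpa r).
Qed.

Lemma rp_bL f a b p x : rep f a b p -> in01 x -> x <= p -> b x = 1.
Proof.
move=> r x01 px; apply/le_anti; have [_ _ _ ->] := rpbnd r x01.
by have [_ +] := rpmono r x01 (rp01 r) px; rewrite (rpb r).
Qed.

Lemma rp_f1 f a b p x : rep f a b p -> in01 x -> 0 <= f x /\ f x <= 1.
Proof. move=> r x01; rewrite (rpE r x01); have [] := rpbnd r x01; move=> *; split; mm. Qed.

Lemma fjoinE f g a b c d p q x : rep f a b p -> rep g c d q -> in01 x ->
  fjoin f g x = Num.min (Num.min (a x) (c x)) (Num.max (b x) (d x)).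
Proof.
move=> rf rg x01; rewrite /fjoin.
set S := [set r | _].
have Sbd : forall r, S r -> r <= 1.
  move=> r [u [w [u01 w01 _ ->]]]; apply: A1; exact: (rp_f1 rf u01).2.
have S0 : S !=set0 by exists (Num.min (f x) (g x)), x, x; rewrite maxxx.
apply/le_anti/andP; split.
- apply: ge_sup => // r [u [w [u01 w01 uw ->]]].
  rewrite (rpE rf u01) (rpE rg w01).
  case: (leP u w) uw => h uw.
  + subst w.
    have [h1 _] := rpmono rf u01 x01 h.
    exact: A2.
  + subst u.
    have [h1 _] := rpmono rg w01 x01 (ltW h).
    exact: A3.
- have LS : forall h, Lset h x !=set0 by move=> h; exists (h x), x.
  case/orP: (le_total (d x) (b x)) => h.
  + apply: (@le_trans _ _ (Num.min (f x) (sup (Lset g x)))).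
      rewrite (rpE rf x01); exact: A4 h (rpL rg x01).
    apply: supL3 => // y [w [w01 wx ->]]; apply: (supL2 Sbd).
    by exists x, w; split => //; rewrite max_l.
  + apply: (@le_trans _ _ (Num.min (g x) (sup (Lset f x)))).
      rewrite (rpE rg x01); exact: A5 h (rpL rf x01).
    apply: supL3 => // y [w [w01 wx ->]]; apply: (supL2 Sbd).
    by exists w, x; split => //; [rewrite max_r | rewrite minC].
Qed.

Lemma fmeetE f g a b c d p q x : rep f a b p -> rep g c d q -> in01 x ->
  fmeet f g x = Num.min (Num.max (a x) (c x)) (Num.min (b x) (d x)).
Proof.
move=> rf rg x01; rewrite /fmeet.
set S := [set r | _].
have Sbd : forall r, S r -> r <= 1.
  move=> r [u [w [u01 w01 _ ->]]]; apply: A1; exact: (rp_f1 rf u01).2.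
have S0 : S !=set0 by exists (Num.min (f x) (g x)), x, x; rewrite minxx.
apply/le_anti/andP; split.
- apply: ge_sup => // r [u [w [u01 w01 uw ->]]].
  rewrite (rpE rf u01) (rpE rg w01).
  case: (leP u w) uw => h uw.
  + subst u.
    have [_ h1] := rpmono rg x01 w01 h.
    exact: B2.
  + subst w.
    have [_ h1] := rpmono rf x01 u01 (ltW h).
    exact: B3.
- have RS : forall h, Rset h x !=set0 by move=> h; exists (h x), x.
  case/orP: (le_total (c x) (a x)) => h.
  + apply: (@le_trans _ _ (Num.min (f x) (sup (Rset g x)))).
      rewrite (rpE rf x01); exact: B4 h (rpR rg x01).
    apply: supL3 => // y [w [w01 wx ->]]; apply: (supL2 Sbd).
    by exists x, w; split => //; rewrite min_l.
  + apply: (@le_trans _ _ (Num.min (g x) (sup (Rset f x)))).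
      rewrite (rpE rg x01); exact: B5 h (rpR rf x01).
    apply: supL3 => // y [w [w01 wx ->]]; apply: (supL2 Sbd).
    by exists w, x; split => //; [rewrite min_r | rewrite minC].
Qed.
End S.


Section Arith2.
Variable R : realType.
Implicit Types (x y z ax bx cx dx : R).
Lemma C1 x y : in01 x -> in01 y -> in01 (Num.max x y).
Proof. rewrite /in01 => /andP[? ?] /andP[? ?]; mm. Qed.
Lemma C2 x y : in01 x -> in01 y -> in01 (Num.min x y).
Proof. rewrite /in01 => /andP[? ?] /andP[? ?]; mm. Qed.
Lemma C3 (a1 a2 c1 c2 : R) : a1 <= a2 -> c1 <= c2 -> Num.min a1 c1 <= Num.min a2 c2.
Proof. move=> *; mm. Qed.
Lemma C4 (a1 a2 c1 c2 : R) : a1 <= a2 -> c1 <= c2 -> Num.max a1 c1 <= Num.max a2 c2.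
Proof. move=> *; mm. Qed.
Lemma C5 (a1 c1 : R) : 0 <= a1 -> a1 <= 1 -> 0 <= c1 -> c1 <= 1 ->
  [&& 0 <= Num.min a1 c1, Num.min a1 c1 <= 1, 0 <= Num.max a1 c1 & Num.max a1 c1 <= 1].
Proof. move=> *; apply/and4P; split; mm. Qed.
Lemma C6 ax bx cx dx : bx = 1 -> dx <= 1 -> ax <= 1 ->
  Num.min ax cx <= Num.min (Num.min ax cx) (Num.max bx dx).
Proof. move=> *; subst; mm. Qed.
Lemma C7 ax bx cx dx : dx = 1 -> bx <= 1 -> ax <= 1 ->
  Num.min ax cx <= Num.min (Num.min ax cx) (Num.max bx dx).
Proof. move=> *; subst; mm. Qed.
Lemma C8 ax bx cx dx : ax <= 1 -> 
  Num.min (Num.min ax cx) (Num.max bx dx) <= 1.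
Proof. move=> *; mm. Qed.
Lemma C9 ax bx cx dx : ax <= 1 -> cx <= 1 ->
  Num.min (Num.max ax cx) (Num.min bx dx) <= 1.
Proof. move=> *; mm. Qed.
Lemma C10 ax bx cx dx : ax = 1 -> cx <= 1 -> bx <= 1 ->
  Num.min bx dx <= Num.min (Num.max ax cx) (Num.min bx dx).
Proof. move=> *; subst; mm. Qed.
Lemma C11 ax bx cx dx : cx = 1 -> ax <= 1 -> bx <= 1 ->
  Num.min bx dx <= Num.min (Num.max ax cx) (Num.min bx dx).
Proof. move=> *; subst; mm. Qed.
Lemma C12 ax bx cx dx : bx = 1 -> dx = 1 -> ax <= 1 -> cx <= 1 ->
  Num.max ax cx <= Num.min (Num.max ax cx) (Num.min bx dx).
Proof. move=> *; subst; mm. Qed.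
Lemma C13 ax bx cx dx : ax = 1 -> cx = 1 -> bx <= 1 -> dx <= 1 ->
  Num.max bx dx <= Num.min (Num.min ax cx) (Num.max bx dx).
Proof. move=> *; subst; mm. Qed.
End Arith2.

Section S2.
Variable R : realType.
Implicit Types (f g h : fuzzy R) (x y : R).

Lemma rp_bnd1 f a b p x : rep f a b p -> in01 x -> a x <= 1 /\ b x <= 1.
Proof. by move=> r x01; have [] := rpbnd r x01. Qed.

Lemma join_peak f g a b c d p q : rep f a b p -> rep g c d q ->
  Num.min (a (Num.max p q)) (c (Num.max p q)) = 1 /\
  Num.max (b (Num.max p q)) (d (Num.max p q)) = 1.
Proof.
move=> rf rg; have pq01 := C1 (rp01 rf) (rp01 rg).
rewrite (rp_aR rf pq01) ?(rp_aR rg pq01) ?le_max ?lexx ?orbT // minxx; split => //.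
case: (leP p q) => h.
  by rewrite (rpb rg) max_r //; have [] := rp_bnd1 rf (rp01 rg).
by rewrite (rpb rf) max_l //; have [] := rp_bnd1 rg (rp01 rf).
Qed.

Lemma meet_peak f g a b c d p q : rep f a b p -> rep g c d q ->
  Num.max (a (Num.min p q)) (c (Num.min p q)) = 1 /\
  Num.min (b (Num.min p q)) (d (Num.min p q)) = 1.
Proof.
move=> rf rg; have pq01 := C2 (rp01 rf) (rp01 rg).
rewrite (rp_bL rf pq01) ?(rp_bL rg pq01) ?ge_min ?lexx ?orbT // minxx; split => //.
case: (leP p q) => h.
  by rewrite (rpa rf) max_l //; have [] := rp_bnd1 rg (rp01 rf).
by rewrite (rpa rg) max_r //; have [] := rp_bnd1 rf (rp01 rg).
Qed.

Lemma rep_join f g a b c d p q : rep f a b p -> rep g c d q ->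
  rep (fjoin f g) (fun x => Num.min (a x) (c x)) (fun x => Num.max (b x) (d x))
      (Num.max p q).
Proof.
move=> rf rg; have pq01 := C1 (rp01 rf) (rp01 rg).
have [pk1 pk2] := join_peak rf rg.
have E := fun x => @fjoinE _ f g a b c d p q x rf rg.
have bd : forall x, in01 x -> fjoin f g x <= 1.
  by move=> x x01; rewrite E //; apply: C8; have [] := rp_bnd1 rf x01.
have top : fjoin f g (Num.max p q) = 1 by rewrite E // pk1 pk2 minxx.
split => //.
- move=> x y x01 y01 xy; have [h1 h2] := rpmono rf x01 y01 xy.
  have [h3 h4] := rpmono rg x01 y01 xy; split; [exact: C3 | exact: C4].
- move=> x x01; have [h1 h2 h3 h4] := rpbnd rf x01; have [h5 h6 h7 h8] := rpbnd rg x01.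
  have /and4P[? ? _ _] := C5 h1 h2 h5 h6; have /and4P[_ _ ? ?] := C5 h3 h4 h7 h8.
  by split.
- move=> x x01.
  have Lb : forall r, Lset (fjoin f g) x r -> r <= 1 by move=> r [w [w01 _ ->]]; exact: bd.
  case: (leP x p) => [xp|px].
    have Ex : Lset (fjoin f g) x (fjoin f g x) by exists x; split.
    apply: le_trans (supL2 Lb Ex); rewrite E //.
    exact: C6 (rp_bL rf x01 xp) (rp_bnd1 rg x01).2 (rp_bnd1 rf x01).1.
  case: (leP x q) => [xq|qx].
    have Ex : Lset (fjoin f g) x (fjoin f g x) by exists x; split.
    apply: le_trans (supL2 Lb Ex); rewrite E //.
    exact: C7 (rp_bL rg x01 xq) (rp_bnd1 rf x01).2 (rp_bnd1 rf x01).1.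
  have Et : Lset (fjoin f g) x 1.
    exists (Num.max p q); split; [by [] | by rewrite ge_max (ltW px) (ltW qx) | by rewrite top].
  apply: le_trans (supL2 Lb Et).
  by rewrite ge_min (rp_bnd1 rf x01).1.
- move=> x x01.
  have Rb : forall r, Rset (fjoin f g) x r -> r <= 1 by move=> r [w [w01 _ ->]]; exact: bd.
  case: (leP x (Num.max p q)) => [xpq|pqx].
    have Et : Rset (fjoin f g) x 1 by exists (Num.max p q); split => //; rewrite top.
    apply: le_trans (supL2 Rb Et).
    by rewrite ge_max (rp_bnd1 rf x01).2 (rp_bnd1 rg x01).2.
  have Ex : Rset (fjoin f g) x (fjoin f g x) by exists x; split.
  apply: le_trans (supL2 Rb Ex); rewrite E //.
  move: pqx; rewrite gt_max => /andP[px qx].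
  exact: C13 (rp_aR rf x01 (ltW px)) (rp_aR rg x01 (ltW qx)) (rp_bnd1 rf x01).2 (rp_bnd1 rg x01).2.
Qed.

Lemma rep_meet f g a b c d p q : rep f a b p -> rep g c d q ->
  rep (fmeet f g) (fun x => Num.max (a x) (c x)) (fun x => Num.min (b x) (d x))
      (Num.min p q).
Proof.
move=> rf rg; have pq01 := C2 (rp01 rf) (rp01 rg).
have [pk1 pk2] := meet_peak rf rg.
have E := fun x => @fmeetE _ f g a b c d p q x rf rg.
have bd : forall x, in01 x -> fmeet f g x <= 1.
  move=> x x01; rewrite E //; apply: C9; [exact: (rp_bnd1 rf x01).1|exact: (rp_bnd1 rg x01).1].
have top : fmeet f g (Num.min p q) = 1 by rewrite E // pk1 pk2 minxx.
split => //.
- move=> x y x01 y01 xy; have [h1 h2] := rpmono rf x01 y01 xy.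
  have [h3 h4] := rpmono rg x01 y01 xy; split; [exact: C4 | exact: C3].
- move=> x x01; have [h1 h2 h3 h4] := rpbnd rf x01; have [h5 h6 h7 h8] := rpbnd rg x01.
  have /and4P[_ _ ? ?] := C5 h1 h2 h5 h6; have /and4P[? ? _ _] := C5 h3 h4 h7 h8.
  by split.
- move=> x x01.
  have Lb : forall r, Lset (fmeet f g) x r -> r <= 1 by move=> r [w [w01 _ ->]]; exact: bd.
  case: (leP (Num.min p q) x) => [pqx|xpq].
    have Et : Lset (fmeet f g) x 1 by exists (Num.min p q); split => //; rewrite top.
    apply: le_trans (supL2 Lb Et).
    by rewrite ge_max (rp_bnd1 rf x01).1 (rp_bnd1 rg x01).1.
  have Ex : Lset (fmeet f g) x (fmeet f g x) by exists x; split.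
  apply: le_trans (supL2 Lb Ex); rewrite E //.
  move: xpq; rewrite lt_min => /andP[xp xq].
  exact: C12 (rp_bL rf x01 (ltW xp)) (rp_bL rg x01 (ltW xq)) (rp_bnd1 rf x01).1 (rp_bnd1 rg x01).1.
- move=> x x01.
  have Rb : forall r, Rset (fmeet f g) x r -> r <= 1 by move=> r [w [w01 _ ->]]; exact: bd.
  case: (leP p x) => [px|xp].
    have Ex : Rset (fmeet f g) x (fmeet f g x) by exists x; split.
    apply: le_trans (supL2 Rb Ex); rewrite E //.
    exact: C10 (rp_aR rf x01 px) (rp_bnd1 rg x01).1 (rp_bnd1 rf x01).2.
  case: (leP q x) => [qx|xq].
    have Ex : Rset (fmeet f g) x (fmeet f g x) by exists x; split.
    apply: le_trans (supL2 Rb Ex); rewrite E //.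
    exact: C11 (rp_aR rg x01 qx) (rp_bnd1 rf x01).1 (rp_bnd1 rf x01).2.
  have Et : Rset (fmeet f g) x 1.
    exists (Num.min p q); split; [by [] | by rewrite le_min (ltW xp) (ltW xq) | by rewrite top].
  apply: le_trans (supL2 Rb Et).
  by rewrite ge_min (rp_bnd1 rf x01).2.
Qed.
End S2.


Section S3.
Variable R : realType.
Implicit Types (f g h : fuzzy R) (x y : R).

Lemma NCFD_Lb f : NCFD f -> forall x r, Lset f x r -> r <= 1.
Proof. by move=> [H _] x r [w [w01 _ ->]]; have /andP[] := H w w01. Qed.
Lemma NCFD_Rb f : NCFD f -> forall x r, Rset f x r -> r <= 1.
Proof. by move=> [H _] x r [w [w01 _ ->]]; have /andP[] := H w w01. Qed.

Lemma NCFD_rep f : NCFD f -> exists p,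
  rep f (fun x => sup (Lset f x)) (fun x => sup (Rset f x)) p.
Proof.
move=> F; have [B [[p p01 fp] C]] := F.
have Lb := NCFD_Lb F; have Rb := NCFD_Rb F.
have L0 : forall x, in01 x -> Lset f x !=set0 by move=> x ?; exists (f x), x.
have R0 : forall x, in01 x -> Rset f x !=set0 by move=> x ?; exists (f x), x.
have Lx : forall x, in01 x -> Lset f x (f x) by move=> x ?; exists x.
have Rx : forall x, in01 x -> Rset f x (f x) by move=> x ?; exists x.
have L1 : forall x, in01 x -> sup (Lset f x) <= 1 by move=> x ?; apply: ge_sup; [exact: L0 | exact: (Lb x)].
have R1 : forall x, in01 x -> sup (Rset f x) <= 1 by move=> x ?; apply: ge_sup; [exact: R0 | exact: (Rb x)].
exists p; split => //.
- by apply/le_anti; rewrite L1 //= -fp; exact: (supL2 (Lb p) (Lx p p01)).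
- by apply/le_anti; rewrite R1 //= -fp; exact: (supL2 (Rb p) (Rx p p01)).
- move=> x x01; apply/le_anti/andP; split.
    by rewrite le_min (supL2 (Lb x)) ?(supL2 (Rb x)) //; [exact: Rx|exact: Lx].
  rewrite minC; apply: supL3; first exact: L0.
  move=> y [u [u01 ux ->]]; rewrite minC; apply: supL3; first exact: R0.
  move=> z [w [w01 xw ->]]; apply: C => //; exact/andP.
- move=> x y x01 y01 xy; split.
    apply: ge_sup; first exact: L0.
    move=> r [w [w01 wx ->]]; apply: (supL2 (Lb y)); exists w; split => //.
    exact: le_trans xy.
  apply: ge_sup; first exact: R0.
  move=> r [w [w01 wx ->]]; apply: (supL2 (Rb x)); exists w; split => //.
  exact: le_trans wx.
- move=> x x01; have /andP[h0 _] := B x x01; split.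
  + exact: le_trans h0 (supL2 (Lb x) (Lx x x01)).
  + exact: L1.
  + exact: le_trans h0 (supL2 (Rb x) (Rx x x01)).
  + exact: R1.
Qed.

Lemma in01_0 : in01 (0 : R). Proof. by rewrite /in01 lexx ler01. Qed.
Lemma in01_1 : in01 (1 : R). Proof. by rewrite /in01 lexx ler01. Qed.

Lemma rep_fbot : rep (@fbot R) (fun _ => 1) (@fbot R) 0.
Proof.
have B : forall x, 0 <= @fbot R x <= 1.
  by move=> x; rewrite /fbot /fsingle; case: eqP => _; rewrite ?lexx ?ler01.
split.
- exact: in01_0.
- by [].
- by rewrite /fbot /fsingle eqxx.
- by move=> x _; rewrite min_r //; case/andP: (B x).
- move=> x y x01 y01 xy; split => //.
  rewrite /fbot /fsingle; case: eqP => [y0|]; last by case: eqP => _; rewrite ?lexx ?ler01.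
  subst y; case/andP: x01 => x0 _; have -> : x = 0 by apply/le_anti; rewrite xy x0.
  by rewrite eqxx.
- by move=> x _; have /andP[? ?] := B x; split; rewrite ?lexx ?ler01.
- move=> x /andP[x0 x1]; apply: (@supL2 _ _ 1).
    by move=> r [w [_ _ ->]]; case/andP: (B w).
  exists 0; split; [exact: in01_0 | by [] | by rewrite /fbot /fsingle eqxx].
- move=> x x01; apply: (@supL2 _ _ 1).
    by move=> r [w [_ _ ->]]; case/andP: (B w).
  by exists x.
Qed.

Lemma rep_ftop : rep (@ftop R) (@ftop R) (fun _ => 1) 1.
Proof.
have B : forall x, 0 <= @ftop R x <= 1.
  by move=> x; rewrite /ftop /fsingle; case: eqP => _; rewrite ?lexx ?ler01.
split.
- exact: in01_1.
- by rewrite /ftop /fsingle eqxx.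
- by [].
- by move=> x _; rewrite min_l //; case/andP: (B x).
- move=> x y x01 y01 xy; split => //.
  rewrite /ftop /fsingle; case: (x =P 1) => [x1|]; last by case: eqP => _; rewrite ?lexx ?ler01.
  subst x; case/andP: y01 => _ y1; have -> : y = 1 by apply/le_anti; rewrite xy y1.
  by rewrite eqxx.
- by move=> x _; have /andP[? ?] := B x; split; rewrite ?lexx ?ler01.
- move=> x x01; apply: (@supL2 _ _ 1).
    by move=> r [w [_ _ ->]]; case/andP: (B w).
  by exists x.
- move=> x /andP[x0 x1]; apply: (@supL2 _ _ 1).
    by move=> r [w [_ _ ->]]; case/andP: (B w).
  exists 1; split; [exact: in01_1 | by [] | by rewrite /ftop /fsingle eqxx].
Qed.

Definition good f := (exists a b p, rep f a b p) /\ (forall v, ~ in01 v -> f v = 0).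

Lemma fjoin_out f g v : ~ in01 v -> fjoin f g v = 0.
Proof.
move=> nv; rewrite /fjoin (_ : [set r | _] = set0) ?sup0 //.
apply/seteqP; split => // r [u [w [u01 w01 uw _]]]; apply: nv; rewrite -uw.
exact: C1.
Qed.

Lemma fmeet_out f g v : ~ in01 v -> fmeet f g v = 0.
Proof.
move=> nv; rewrite /fmeet (_ : [set r | _] = set0) ?sup0 //.
apply/seteqP; split => // r [u [w [u01 w01 uw _]]]; apply: nv; rewrite -uw.
exact: C2.
Qed.

Lemma good_join f g : good f -> good g -> good (fjoin f g).
Proof.
move=> [[a [b [p rf]]] _] [[c [d [q rg]]] _]; split; last exact: fjoin_out.
by do 3 eexists; apply: rep_join rf rg.
Qed.

Lemma good_meet f g : good f -> good g -> good (fmeet f g).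
Proof.
move=> [[a [b [p rf]]] _] [[c [d [q rg]]] _]; split; last exact: fmeet_out.
by do 3 eexists; apply: rep_meet rf rg.
Qed.

Lemma good_fbot : good (@fbot R).
Proof.
split; first by do 3 eexists; exact: rep_fbot.
move=> v nv; rewrite /fbot /fsingle; case: eqP => // v0; subst v.
by case: nv; exact: in01_0.
Qed.

Lemma good_ftop : good (@ftop R).
Proof.
split; first by do 3 eexists; exact: rep_ftop.
move=> v nv; rewrite /ftop /fsingle; case: eqP => // v0; subst v.
by case: nv; exact: in01_1.
Qed.

Lemma good_eq f g a b p c d q : good f -> good g -> rep f a b p -> rep g c d q ->
  (forall x, in01 x -> a x = c x) -> (forall x, in01 x -> b x = d x) -> f = g.
Proof.
move=> [_ fo] [_ go] rf rg ac bd; apply/funext => v.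
case: (pselect (in01 v)) => v01; last by rewrite fo // go.
by rewrite (rpE rf v01) (rpE rg v01) ac ?bd.
Qed.

Definition nz f : fuzzy R := fun v => if (0 <= v <= 1) then f v else 0.

Lemma NCFD_good f : NCFD f -> good (nz f).
Proof.
move=> F; have [p rf] := NCFD_rep F.
have E : forall x, in01 x -> nz f x = f x by move=> x x01; rewrite /nz x01.
split; last by move=> v nv; rewrite /nz; case: ifP => // h; case: nv.
exists (fun x => sup (Lset f x)), (fun x => sup (Rset f x)), p.
have LE : forall x, Lset (nz f) x = Lset f x.
  by move=> x; apply/seteqP; split => r [w [w01 wx ->]]; exists w; rewrite ?E.
have RE : forall x, Rset (nz f) x = Rset f x.
  by move=> x; apply/seteqP; split => r [w [w01 wx ->]]; exists w; rewrite ?E.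
case: rf => *; split => //.
- by move=> x x01; rewrite E //; auto.
- by move=> x x01; rewrite LE.
- by move=> x x01; rewrite RE.
Qed.

Lemma fjoin_nz f g : fjoin (nz f) (nz g) = fjoin f g.
Proof.
apply/funext => v; rewrite /fjoin; congr sup; apply/seteqP; split => r
  [u [w [u01 w01 uw ->]]]; exists u, w; by rewrite /nz u01 w01.
Qed.

Lemma fmeet_nz f g : fmeet (nz f) (nz g) = fmeet f g.
Proof.
apply/funext => v; rewrite /fmeet; congr sup; apply/seteqP; split => r
  [u [w [u01 w01 uw ->]]]; exists u, w; by rewrite /nz u01 w01.
Qed.

Lemma nz_good f : good f -> nz f = f.
Proof.
move=> [_ fo]; apply/funext => v; rewrite /nz; case: ifP => // h.
by rewrite fo // => /negP; rewrite h.
Qed.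
End S3.


Record NF (R : realType) := MkNF { nv : fuzzy R; nP : good nv }.

Section S4.
Variable R : realType.
Local Notation NF := (NF R).
Implicit Types (x y z : NF).

Lemma nf_eq x y : nv x = nv y -> x = y.
Proof.
case: x y => f pf [g pg] /= e; subst g; congr MkNF; exact: Prop_irrelevance.
Qed.

Definition njoin x y : NF := MkNF (good_join (nP x) (nP y)).
Definition nmeet x y : NF := MkNF (good_meet (nP x) (nP y)).
Definition nbot : NF := MkNF (@good_fbot R).
Definition ntop : NF := MkNF (@good_ftop R).

Lemma nrep x : exists a b p, rep (nv x) a b p.
Proof. by case: (nP x). Qed.

Ltac getrep x := let a := fresh "a" in let b := fresh "b" in let p := fresh "p" in
  let r := fresh "r" in have [a [b [p r]]] := nrep x.

Lemma njoinA : associative njoin.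
Proof.
move=> x y z; apply: nf_eq => /=; getrep x; getrep y; getrep z.
apply: (good_eq (good_join (nP x) (good_join (nP y) (nP z)))
  (good_join (good_join (nP x) (nP y)) (nP z))
  (rep_join r (rep_join r0 r1)) (rep_join (rep_join r r0) r1)) => t _ /=.
  by rewrite minA.
by rewrite maxA.
Qed.

Lemma njoinC : commutative njoin.
Proof.
move=> x y; apply: nf_eq => /=; getrep x; getrep y.
apply: (good_eq (good_join (nP x) (nP y)) (good_join (nP y) (nP x))
  (rep_join r r0) (rep_join r0 r)) => t _ /=.
  by rewrite minC.
by rewrite maxC.
Qed.

Lemma nmeetA : associative nmeet.
Proof.
move=> x y z; apply: nf_eq => /=; getrep x; getrep y; getrep z.
apply: (good_eq (good_meet (nP x) (good_meet (nP y) (nP z)))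
  (good_meet (good_meet (nP x) (nP y)) (nP z))
  (rep_meet r (rep_meet r0 r1)) (rep_meet (rep_meet r r0) r1)) => t _ /=.
  by rewrite maxA.
by rewrite minA.
Qed.

Lemma nmeetC : commutative nmeet.
Proof.
move=> x y; apply: nf_eq => /=; getrep x; getrep y.
apply: (good_eq (good_meet (nP x) (nP y)) (good_meet (nP y) (nP x))
  (rep_meet r r0) (rep_meet r0 r)) => t _ /=.
  by rewrite maxC.
by rewrite minC.
Qed.

Lemma njoin0 : left_id nbot njoin.
Proof.
move=> x; apply: nf_eq => /=; getrep x.
apply: (good_eq (good_join (@good_fbot R) (nP x)) (nP x)
  (rep_join (@rep_fbot R) r) r) => t t01 /=; have [h0 h1 h2 h3] := rpbnd r t01.
  by rewrite min_r.
rewrite /fbot /fsingle; case: eqP => [t0|_]; last by rewrite max_r.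
by subst t; rewrite (rp_bL r t01) ?maxxx //; case/andP: (rp01 r).
Qed.

Lemma nmeet0 : left_zero nbot nmeet.
Proof.
move=> x; apply: nf_eq => /=; getrep x.
apply: (good_eq (good_meet (@good_fbot R) (nP x)) (@good_fbot R)
  (rep_meet (@rep_fbot R) r) (@rep_fbot R)) => t t01 /=; have [h0 h1 h2 h3] := rpbnd r t01.
  by rewrite max_l.
rewrite /fbot /fsingle; case: eqP => [t0|_]; last by rewrite min_l.
by subst t; rewrite (rp_bL r t01) ?minxx //; case/andP: (rp01 r).
Qed.

Lemma nmeet0r : right_zero nbot nmeet.
Proof. by move=> x; rewrite nmeetC nmeet0. Qed.

Lemma nmeet1 : right_id ntop nmeet.
Proof.
move=> x; apply: nf_eq => /=; getrep x.
apply: (good_eq (good_meet (nP x) (@good_ftop R)) (nP x)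
  (rep_meet r (@rep_ftop R)) r) => t t01 /=; have [h0 h1 h2 h3] := rpbnd r t01.
  rewrite /ftop /fsingle; case: eqP => [t0|_]; last by rewrite max_l.
  by subst t; rewrite (rp_aR r t01) ?maxxx //; case/andP: (rp01 r).
by rewrite min_l.
Qed.

Lemma ndistl : left_distributive nmeet njoin.
Proof.
move=> x y z; apply: nf_eq => /=; getrep x; getrep y; getrep z.
apply: (good_eq (good_meet (good_join (nP x) (nP y)) (nP z))
  (good_join (good_meet (nP x) (nP z)) (good_meet (nP y) (nP z)))
  (rep_meet (rep_join r r0) r1) (rep_join (rep_meet r r1) (rep_meet r0 r1))) => t _ /=.
  by rewrite max_minl.
by rewrite min_maxl.
Qed.

Lemma ndistr : right_distributive nmeet njoin.
Proof. by move=> x y z; rewrite nmeetC ndistl !(nmeetC x). Qed.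
End S4.

HB.instance Definition _ (R : realType) :=
  Monoid.isComLaw.Build (NF R) (nbot R) (@njoin R) (@njoinA R) (@njoinC R) (@njoin0 R).
HB.instance Definition _ (R : realType) :=
  Monoid.isMulLaw.Build (NF R) (nbot R) (@nmeet R) (@nmeet0 R) (@nmeet0r R).
HB.instance Definition _ (R : realType) :=
  Monoid.isAddLaw.Build (NF R) (@nmeet R) (@njoin R) (@ndistl R) (@ndistr R).

Close Scope classical_set_scope.

Section S5.
Variable R : realType.
Local Notation NF := (NF R).

Definition nlift (f : fuzzy R) : NF :=
  match pselect (good f) with left H => MkNF H | right _ => nbot R end.

Lemma nliftK f : good f -> nv (nlift f) = f.
Proof. by rewrite /nlift; case: pselect. Qed.

Lemma nv_big k (F : 'I_k -> NF) :
  nv (\big[@njoin R/nbot R]_(i < k) F i) = \big[@fjoin R/@fbot R]_(i < k) nv (F i).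
Proof. exact: (big_morph (@nv R) (fun x y => erefl) erefl). Qed.

Lemma tens_lt m n (i : 'I_m) (j : 'I_n) : (i * n + j < m * n)%N.
Proof. have := ltn_ord i; have := ltn_ord j; nia. Qed.

Definition tens_idx m n (p : 'I_m * 'I_n) : 'I_(m * n) := Ordinal (tens_lt p.1 p.2).

Lemma tens_rowK m n (p : 'I_m * 'I_n) : tens_row (tens_idx p) = p.1.
Proof.
apply: val_inj => /=; have := ltn_ord p.2; move=> h.
by rewrite divnMDl ?divn_small ?addn0 //; exact: leq_ltn_trans h.
Qed.

Lemma tens_colK m n (p : 'I_m * 'I_n) : tens_col (tens_idx p) = p.2.
Proof.
by apply: val_inj => /=; rewrite modnMDl modn_small.
Qed.

Lemma tens_idxK m n (t : 'I_(m * n)) : tens_idx (tens_row t, tens_col t) = t.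
Proof. by apply: val_inj => /=; rewrite -divn_eq. Qed.

Lemma nbig_tens m n (F : 'I_m -> 'I_n -> NF) :
  \big[@njoin R/nbot R]_(t < m * n) F (tens_row t) (tens_col t) =
  \big[@njoin R/nbot R]_(i < m) \big[@njoin R/nbot R]_(j < n) F i j.
Proof.
rewrite pair_big (reindex (@tens_idx m n)) /=.
  by apply: eq_bigr => p _; rewrite tens_rowK tens_colK.
by exists (fun t => (tens_row t, tens_col t)) => [p _|t _];
  [case: p => i j; rewrite tens_rowK tens_colK | rewrite tens_idxK].
Qed.

Lemma nbig_meet m n (F : 'I_m -> NF) (G : 'I_n -> NF) :
  \big[@njoin R/nbot R]_(t < m * n) nmeet (F (tens_row t)) (G (tens_col t)) =
  nmeet (\big[@njoin R/nbot R]_(i < m) F i) (\big[@njoin R/nbot R]_(j < n) G j).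
Proof. by rewrite (nbig_tens (fun i j => nmeet (F i) (G j))) big_distrlr. Qed.
End S5.


Section S6.
Variable R : realType.
Local Notation NF := (NF R).
Local Notation fuzzy := (fuzzy R).

Definition mw k m (A : 'M[fuzzy]_(k, m)) := forall i j, good (nz (A i j)).

Lemma nlift_meet (f g : fuzzy) : good (nz f) -> good (nz g) ->
  nlift (nz (fmeet f g)) = nmeet (nlift (nz f)) (nlift (nz g)).
Proof.
move=> hf hg; apply: nf_eq => /=; rewrite !nliftK //.
  by rewrite -fmeet_nz nz_good //; apply: good_meet.
by rewrite -fmeet_nz nz_good //; apply: good_meet.
Qed.

Lemma fcomp_entry k m p (A : 'M[fuzzy]_(k, m)) (B : 'M[fuzzy]_(m, p)) i j :
  mw A -> mw B ->
  fcomp A B i j = nv (\big[@njoin R/nbot R]_(y < m)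
                        nmeet (nlift (nz (A i y))) (nlift (nz (B y j)))).
Proof.
move=> hA hB; rewrite mxE nv_big; apply: eq_bigr => y _ /=.
by rewrite !nliftK // fmeet_nz.
Qed.

Lemma fcomp_good k m p (A : 'M[fuzzy]_(k, m)) (B : 'M[fuzzy]_(m, p)) :
  mw A -> mw B -> forall i j, good (fcomp A B i j).
Proof. by move=> hA hB i j; rewrite fcomp_entry //; exact: nP. Qed.

Lemma mw_good k m (A : 'M[fuzzy]_(k, m)) : (forall i j, good (A i j)) -> mw A.
Proof. by move=> h i j; rewrite nz_good. Qed.

Lemma fcomp_mw k m p (A : 'M[fuzzy]_(k, m)) (B : 'M[fuzzy]_(m, p)) :
  mw A -> mw B -> mw (fcomp A B).
Proof. by move=> hA hB; apply: mw_good; exact: fcomp_good. Qed.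

Lemma tens_mw k m p s (A : 'M[fuzzy]_(k, m)) (B : 'M[fuzzy]_(p, s)) :
  mw A -> mw B -> mw (ftens A B).
Proof.
move=> hA hB; apply: mw_good => i j; rewrite mxE -fmeet_nz; exact: good_meet.
Qed.

Lemma nmeet_perm (X Y A B : NF) :
  nmeet (nmeet X Y) (nmeet A B) = nmeet (nmeet X A) (nmeet Y B).
Proof.
by rewrite -!nmeetA (nmeetA Y) (nmeetC Y A) -(nmeetA A).
Qed.

Lemma nv_meet (X Y : NF) : fmeet (nv X) (nv Y) = nv (nmeet X Y).
Proof. by []. Qed.

Lemma tens_comp k k' m n m' n' (x : 'M[fuzzy]_(k, m)) (y : 'M[fuzzy]_(k', n))
  (A : 'M[fuzzy]_(m, m')) (B : 'M[fuzzy]_(n, n')) :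
  mw x -> mw y -> mw A -> mw B ->
  fcomp (ftens x y) (ftens A B) = ftens (fcomp x A) (fcomp y B).
Proof.
move=> hx hy hA hB; apply/matrixP => r c.
have hxy := tens_mw hx hy; have hAB := tens_mw hA hB.
rewrite [RHS]mxE (fcomp_entry r c) //.
rewrite (fcomp_entry (tens_row r) (tens_row c)) // (fcomp_entry (tens_col r) (tens_col c)) //.
rewrite nv_meet; congr nv; rewrite -nbig_meet; apply: eq_bigr => t _.
by rewrite !mxE !nlift_meet // nmeet_perm.
Qed.
End S6.


Section S7.
Variable R : realType.
Local Notation NF := (NF R).
Local Notation fuzzy := (fuzzy R).

Lemma ones_mw N : mw ((@fones R N)^T).
Proof. by apply: mw_good => i j; rewrite !mxE; exact: good_ftop. Qed.

Lemma nlift_top : nlift (nz (@ftop R)) = ntop R.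
Proof. by apply: nf_eq; rewrite /= !nliftK ?nz_good //; exact: good_ftop. Qed.

Lemma tens_ones k k' m n (c : 'M[fuzzy]_(k, m)) (d : 'M[fuzzy]_(k', n)) r (j : 'I_1) :
  mw c -> mw d ->
  (fcomp (ftens c d) (@fones R (m * n)%N)^T) r j =
  fmeet ((fcomp c (@fones R m)^T) (tens_row r) j) ((fcomp d (@fones R n)^T) (tens_col r) j).
Proof.
move=> hc hd; have hcd := tens_mw hc hd.
have o1 : mw (@fones R (m * n)%N)^T by apply: ones_mw.
have o2 : mw (@fones R m)^T by apply: ones_mw.
have o3 : mw (@fones R n)^T by apply: ones_mw.
rewrite (fcomp_entry r j) // (fcomp_entry (tens_row r) j) //.
rewrite (fcomp_entry (tens_col r) j) // nv_meet; congr nv.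
rewrite -nbig_meet; apply: eq_bigr => t _.
by rewrite !mxE nlift_meet // !nlift_top !nmeet1.
Qed.

Lemma tens_ones1 m n (c : 'M[fuzzy]_(1, m)) (d : 'M[fuzzy]_(1, n)) (i j : 'I_1) :
  mw c -> mw d ->
  (fcomp (ftens c d : 'M_(1, m * n)) (@fones R (m * n)%N)^T) i j =
  fmeet ((fcomp c (@fones R m)^T) i j) ((fcomp d (@fones R n)^T) i j).
Proof.
move=> hc hd; rewrite (@tens_ones 1 1 m n c d i j hc hd).
by rewrite !(ord1 (tens_row _)) !(ord1 (tens_col _)) (ord1 i).
Qed.

Lemma funit_mw N : mw (@funit R N).
Proof.
apply: mw_good => i j; rewrite mxE; case: eqP => _; [exact: good_ftop | exact: good_fbot].
Qed.

Lemma ncfd_mw k p (A : 'M[fuzzy]_(k, p)) : NCFD_mx A -> mw A.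
Proof. by move=> h i j; apply: NCFD_good. Qed.
End S7.

Theorem proposition4 (R : realType) (E : Type) (m n : nat)
    (G1 : bfa R E m) (G2 : bfa R E n) :
  bfa_wf G1 -> bfa_wf G2 ->
  forall s : seq E, all (predU (bfa_ev G1) (bfa_ev G2)) s ->
  forall v : R, in01 v ->
    lang (par G1 G2) s v = fmeet (lang_ext G1 s) (lang_ext G2 s) v.
Proof.
move=> [x1w _ T1w] [x2w _ T2w] s Hs v v01.
pose M1 := fun e => if bfa_ev G1 e then bfa_trans G1 e else @funit R m.
pose M2 := fun e => if bfa_ev G2 e then bfa_trans G2 e else @funit R n.
have M1w : forall e, mw (M1 e).
  by move=> e; rewrite /M1; case: ifP => h; [exact/ncfd_mw/T1w | exact: funit_mw].
have M2w : forall e, mw (M2 e).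
  by move=> e; rewrite /M2; case: ifP => h; [exact/ncfd_mw/T2w | exact: funit_mw].
have Pt : forall e, predU (bfa_ev G1) (bfa_ev G2) e ->
    bfa_trans (par G1 G2) e = ftens (M1 e) (M2 e).
  move=> e; rewrite /= /M1 /M2.
  by case: (bfa_ev G1 e); case: (bfa_ev G2 e).
have Fold : forall s, all (predU (bfa_ev G1) (bfa_ev G2)) s ->
    forall (x : 'rV_m) (y : 'rV_n), mw x -> mw y ->
    foldl (fun acc e => fcomp acc (bfa_trans (par G1 G2) e)) (ftens x y) s =
    ftens (foldl (fun acc e => fcomp acc (M1 e)) x s)
          (foldl (fun acc e => fcomp acc (M2 e)) y s).
  elim => [|e s' IH] // /andP[He Hs'] x y hx hy.
  change (foldl (fun acc e => fcomp acc (bfa_trans (par G1 G2) e))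
    (fcomp (ftens x y) (bfa_trans (par G1 G2) e)) s' =
    ftens (foldl (fun acc e => fcomp acc (M1 e)) (fcomp x (M1 e)) s')
          (foldl (fun acc e => fcomp acc (M2 e)) (fcomp y (M2 e)) s')).
  by rewrite Pt // tens_comp // IH //; apply: fcomp_mw.
have Fw1 : forall s (x : 'rV_m), mw x -> mw (foldl (fun acc e => fcomp acc (M1 e)) x s).
  by elim => [|e s' IH] //= x hx; apply: IH; apply: fcomp_mw.
have Fw2 : forall s (x : 'rV_n), mw x -> mw (foldl (fun acc e => fcomp acc (M2 e)) x s).
  by elim => [|e s' IH] //= x hx; apply: IH; apply: fcomp_mw.
case: s Hs => [|e s] Hs.
  by rewrite /lang /lang_ext /= (nv_meet (ntop R) (ntop R)) nmeet1.
rewrite /lang /lang_ext /lang_with.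
rewrite [bfa_x0 (par G1 G2)]/= Fold //.
apply: (f_equal (fun f : fuzzy R => f v)).
apply: tens_ones1.
- by apply: Fw1; exact: ncfd_mw.
- by apply: Fw2; exact: ncfd_mw.
all: exact: ncfd_mw.
Qed.
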